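(* Let $T,T'\in\overline{\mathrm{Sub}}(X,1)$. (1) If $T\neq T'$ then $\mathcal{R}(T)\cap\mathcal{R}(T')=\emptyset$. (2) If $gT=T'$ for some $g\in F_N$, then $(\mu\times\nu)(\mathcal{R}(T))=(\mu\times\nu)(\mathcal{R}(T'))$ for all $\mu,\nu\in\mathcal{S}\mathrm{Curr}(F_N)$. (3) The map $\mathcal{S}\mathrm{Curr}(F_N)\times\mathcal{S}\mathrm{Curr}(F_N)\to\mathbb{R}_{\geq0}$, $(\mu,\nu)\mapsto(\mu\times\nu)(\mathcal{R}(T))$, is continuous and $\mathbb{R}_{\geq0}$-bilinear.
   Context: $N\geq2$, $F_N$ free with free basis $A$, $X$ its Cayley graph (a tree, vertex set $F_N$), $\partial X$ its boundary. $\mathcal{C}_N$: closed subsets of $\partial X$ with at least two points, Vietoris (Hausdorff) topology; $\mathcal{S}\mathrm{Curr}(F_N)$: $F_N$-invariant Borel measures on $\mathcal{C}_N$ finite on compact sets, with the weak-* topology. For $S\in\mathcal{C}_N$, $\mathrm{Conv}(S)$ is the union of bi-infinite geodesics in $X$ joining points of $S$. $\overline{\mathrm{Sub}}(X,1)$: the set of finite subtrees of $X$ containing the vertex $1$ (including the one-vertex tree $\{1\}$). $\mathcal{R}(T)=\{(S_1,S_2)\in\mathcal{C}_N\times\mathcal{C}_N:\mathrm{Conv}(S_1)\cap\mathrm{Conv}(S_2)=T\}$. *)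

(* Defs.v *)
From HB Require Import structures.
From mathcomp Require Import all_boot all_order all_algebra.
From mathcomp Require Import all_classical all_reals all_analysis.
Set Implicit Arguments. Unset Strict Implicit. Unset Printing Implicit Defensive.
Import Order.TTheory GRing.Theory Num.Theory.
Import numFieldNormedType.Exports.
Local Open Scope classical_set_scope.

(* Free group F_N of rank N = n.+2 (this encodes N >= 2).
   Letters: (i, true) = a_i, (i, false) = a_i^{-1}, for i : 'I_N. *)
Section FreeGroup.
Variable n : nat.
Notation N := n.+2.

Definition letter := ('I_N * bool)%type.
Definition linv (x : letter) : letter := (x.1, ~~ x.2).

Definition reduced (w : seq letter) : bool := sorted (fun a b => b != linv a) w.

(* Elements of F_N = vertices of the Cayley tree X = reduced words. *)
Definition vertex := {w : seq letter | reduced w}.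

Definition vone : vertex := exist _ [::] erefl.

Definition pushw (x : letter) (w : seq letter) : seq letter :=
  if w is y :: w' then (if y == linv x then w' else x :: w) else [:: x].
Definition mulw (g w : seq letter) : seq letter := foldr pushw w g.

(* Cayley graph X of F_N w.r.t. the free basis A: g -- g x for x in A^{+-1} *)
Definition adj (u v : vertex) : bool :=
  [exists x : letter, val v == mulw (val u) [:: x]].

(* Sub(X,1) : finite subtrees of X containing the vertex 1 (a subtree of a tree
   is determined by its vertex set). *)
Definition connected_vset (T : set vertex) : Prop :=
  forall u v, T u -> T v ->
    exists p : seq vertex, [/\ path adj u p, last u p = v & forall w, w \in p -> T w].
Definition subtree1 (T : set vertex) : Prop :=
  [/\ finite_set T, T vone & connected_vset T].

Definition vtranslate (g : vertex) (T : set vertex) : set vertex :=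
  [set v | exists u, T u /\ val v = mulw (val g) (val u)].

(* Boundary dX: infinite reduced words (geodesic rays from 1). *)
Definition bdry := {xi : nat -> letter | forall k, xi k.+1 != linv (xi k)}.

(* cylinder (shadow) topology on dX *)
Definition bopen (U : set bdry) : Prop :=
  forall xi, U xi -> exists m, forall eta : bdry,
    (forall i, (i < m)%N -> sval eta i = sval xi i) -> U eta.
Definition bclosed (S : set bdry) : Prop := bopen (~` S).

Definition pushb (x : letter) (f : nat -> letter) : nat -> letter :=
  if f 0%N == linv x then (fun k => f k.+1)
  else (fun k => if k is k'.+1 then f k' else x).
Definition actb (g : seq letter) (f : nat -> letter) : nat -> letter :=
  foldr pushb f g.

Definition CNprop (S : set bdry) : Prop :=
  bclosed S /\ exists xi eta, [/\ S xi, S eta & xi <> eta].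
Definition CN := {S : set bdry | CNprop S}.

Let c0 : nat -> letter := fun _ => (ord0, true).
Let c1 : nat -> letter := fun _ => (ord0, false).
Let c0P : forall k, c0 k.+1 != linv (c0 k). Proof. by []. Qed.
Let c1P : forall k, c1 k.+1 != linv (c1 k). Proof. by []. Qed.
Let CNT : CNprop setT.
Proof.
split; first by move=> xi [].
exists (exist _ c0 c0P), (exist _ c1 c1P); split=> // E.
by have := f_equal (fun z : bdry => sval z 0%N) E.
Qed.
Definition CNtop : CN := exist _ setT CNT.

HB.instance Definition _ := gen_eqMixin CN.
HB.instance Definition _ := gen_choiceMixin CN.
HB.instance Definition _ := isPointed.Build CN CNtop.

(* Vietoris topology on C_N, given by its usual subbase:
   {S | S `<=` U} and {S | S meets U}, for U open in dX. *)
Definition vietoris_sub (p : set bdry * bool) : set CN :=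
  if p.2 then [set S | sval S `<=` p.1] else [set S | sval S `&` p.1 !=set0].
HB.instance Definition _ := @isSubBaseTopological.Build CN
  (set bdry * bool)%type [set p | bopen p.1] vietoris_sub.

Definition CNm := g_sigma_algebraType (@open CN).

(* The geodesic from xi to eta (xi <> eta) consists of the prefixes of length m of
   xi and of eta, for m >= the length of the longest common prefix. *)
Definition on_geod (xi eta : nat -> letter) (v : seq letter) : Prop :=
  exists m, (v = mkseq xi m \/ v = mkseq eta m) /\
            exists i, (i <= m)%N /\ xi i != eta i.
Definition Conv (S : set bdry) : set vertex :=
  [set v | exists xi eta, [/\ S xi, S eta, xi <> eta & on_geod (sval xi) (sval eta) (val v)]].

Definition RR (T : set vertex) : set (CNm * CNm) :=
  [set p | Conv (sval p.1) `&` Conv (sval p.2) = T].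

Definition ctranslate (g : vertex) (A : set CN) : set CN :=
  [set S | exists S', A S' /\
     sval S = [set xi : bdry | exists eta, sval S' eta /\ sval xi = actb (val g) (sval eta)]].

Section Currents.
Variable R : realType.
Local Open Scope ring_scope.
Local Open Scope ereal_scope.

Definition SCurr (mu : {measure set CNm -> \bar R}) : Prop :=
  (forall (g : vertex) (A : set CNm), measurable A -> mu (ctranslate g A) = mu A) /\
  (forall K : set CN, compact K -> mu K < +oo).

Definition Cc (f : CN -> R) : Prop :=
  continuous f /\ exists K : set CN, compact K /\ forall S, ~ K S -> f S = 0%R.

End Currents.
End FreeGroup.

(* Main.v *)
Require Import Defs.
From HB Require Import structures.
From mathcomp Require Import all_boot all_order all_algebra.
From mathcomp Require Import all_classical all_reals all_analysis.
From mathcomp Require Import ring lra.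
Import Order.TTheory GRing.Theory Num.Theory.
Import numFieldNormedType.Exports.

Module MLib1.
Import Order.TTheory GRing.Theory Num.Theory.
Import numFieldNormedType.Exports.
Set Implicit Arguments. Unset Strict Implicit. Unset Printing Implicit Defensive.
Local Open Scope classical_set_scope.

Section Words.
Variable n : nat.
Local Notation letter := (letter n).
Local Notation bdry := (bdry n).
Local Notation CN := (CN n).
Local Notation vertex := (vertex n).

Lemma take_mkseq (f : nat -> letter) k m : (k <= m)%N -> take k (mkseq f m) = mkseq f k.
Proof.
by move=> km; rewrite /mkseq -map_take take_iota (minn_idPl km).
Qed.

Definition Cyl (w : seq letter) : set bdry := [set xi | mkseq (sval xi) (size w) = w].
Definition E (w : seq letter) : set CN := [set S | sval S `&` Cyl w !=set0].
Definition Root : set CN :=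
  [set S | exists xi eta, [/\ sval S xi, sval S eta & sval xi 0%N != sval eta 0%N]].

Lemma E_take w k S : E w S -> E (take k w) S.
Proof.
move=> [xi [Sxi Cxi]]; exists xi; split=> //; rewrite /Cyl /= -{2}Cxi size_take.
case: ltnP => h; first by rewrite take_mkseq // ltnW.
by rewrite take_oversize // size_mkseq.
Qed.

Lemma ConvE (S : CN) : Root S -> forall v : vertex, Conv (sval S) v <-> E (val v) S.
Proof.
move=> [z1 [z2 [S1 S2 z12]]] v; split.
  move=> [xi [eta [Sxi Seta _ [m [[e|e] _]]]]].
    by exists xi; split=> //; rewrite /Cyl /= e size_mkseq.
  by exists eta; split=> //; rewrite /Cyl /= e size_mkseq.
move=> [xi [Sxi Cxi]].
have [eta [Seta neq]] : exists eta, sval S eta /\ sval xi 0%N != sval eta 0%N.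
  case: (eqVneq (sval xi 0%N) (sval z1 0%N)) => h; last by exists z1.
  by exists z2; split=> //; rewrite h.
exists xi, eta; split=> //.
  by move=> e; move: neq; rewrite e eqxx.
exists (size (val v)); split; first by left; rewrite Cxi.
by exists 0%N.
Qed.

Lemma Root_Conv1 (S : CN) : Conv (sval S) (vone n) -> Root S.
Proof.
move=> [xi [eta [Sxi Seta _ [m [e [i [im neq]]]]]]].
have m0 : m = 0%N.
  by case: e => /(f_equal size); rewrite size_mkseq /=.
move: im; rewrite m0 leqn0 => /eqP i0; subst i.
by exists xi, eta.
Qed.

Lemma RR_D (T : set vertex) : T (vone n) -> forall X : CNm n * CNm n,
  RR T X <-> [/\ Root X.1, Root X.2 &
     forall v, T v <-> (E (val v) X.1 /\ E (val v) X.2)].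
Proof.
move=> T1 X; split.
  move=> h.
  have c1 : (Conv (sval X.1) `&` Conv (sval X.2)) (vone n) by rewrite /RR /= in h; rewrite h.
  have r1 := Root_Conv1 c1.1; have r2 := Root_Conv1 c1.2.
  split=> // v; rewrite /RR /= in h; rewrite -h /setI /=.
  by rewrite !(propext (ConvE _ _)).
move=> [r1 r2 h]; rewrite /RR /=; apply/seteqP; split=> v /=.
  by move=> [/(ConvE r1) a /(ConvE r2) b]; apply/h.
by move=> /h [a b]; split; apply/ConvE.
Qed.

End Words.

End MLib1.
Import MLib1.

Module MLib2.
Import Order.TTheory GRing.Theory Num.Theory.
Import numFieldNormedType.Exports.
Set Implicit Arguments. Unset Strict Implicit. Unset Printing Implicit Defensive.
Local Open Scope classical_set_scope.

Section Pat.
Variable n : nat.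
Local Notation letter := (letter n).
Local Notation bdry := (bdry n).
Local Notation CN := (CN n).
Local Notation vertex := (vertex n).

Definition vpar (v : vertex) : vertex :=
  exist _ (take (size (val v)).-1 (val v)) (take_sorted _ (valP v)).

Definition children (v : vertex) : seq vertex :=
  pmap (fun x : ('I_n.+2 * bool)%type => insub (rcons (val v) x)) (enum [set: ('I_n.+2 * bool)%type]).

Definition LL (T : set vertex) : seq vertex :=
  flatten [seq v :: children v | v <- finmap.enum_fset (fset_set T)].

Lemma LL_mem T : finite_set T -> forall v, T v -> v \in LL T.
Proof.
move=> fT v Tv; apply/flattenP; exists (v :: children v); last by rewrite inE eqxx.
by apply/mapP; exists v => //; rewrite in_fset_set // inE.
Qed.

Lemma vone_eq (v : vertex) : size (val v) = 0%N -> v = vone n.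
Proof. by move=> /size0nil h; apply/val_inj; rewrite h. Qed.

Lemma LL_child T : finite_set T -> forall v, T (vpar v) -> v \in LL T.
Proof.
move=> fT v Tp.
case: (eqVneq (size (val v)) 0%N) => s0.
  have := Tp; rewrite (_ : vpar v = v); first exact: LL_mem.
  by apply/val_inj; rewrite /= s0 take0 (size0nil s0).
apply/flattenP; exists (vpar v :: children (vpar v)).
  by apply/mapP; exists (vpar v) => //; rewrite in_fset_set // inE.
rewrite inE; apply/orP; right; rewrite mem_pmap; apply/mapP.
case: v s0 Tp => w rw /= s0 Tp.
exists (last (ord0, true) w); first by rewrite mem_enum in_setT.
have -> : rcons (take (size w).-1 w) (last (ord0, true) w) = w.
  case/lastP: w rw s0 Tp => [|w' x] //= _ _ _.
  by rewrite size_rcons /= last_rcons -!cats1 take_size_cat.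

by case: insubP => [u _ e|/negP//]; congr Some; apply/val_inj; rewrite /= e.
Qed.

Lemma D_eq (T : set vertex) (Dset : set vertex) : finite_set T -> T (vone n) ->
  (forall v, Dset v -> Dset (vpar v)) ->
  (forall v, v \in LL T -> (T v <-> Dset v)) -> forall v, T v <-> Dset v.
Proof.
move=> fT T1 Dp h v; split=> [Tv|]; first by apply/h => //; exact: LL_mem.
move: {2}(size (val v)) (erefl (size (val v))) => k.
elim: k v => [|k IH] v sv Dv; first by rewrite (vone_eq sv).
have Tp : T (vpar v).
  apply: IH; last exact: Dp.
  by rewrite /= size_take sv /= ltnSn.
by apply/h => //; exact: LL_child.
Qed.

Section Patterns.
Variable T : set vertex.
Definition kk := size (LL T).
Definition idx (i : 'I_kk) : vertex := nth (vone n) (LL T) i.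
Definition pat (S : CN) : {ffun 'I_kk -> bool} := [ffun i => `[< E (val (idx i)) S >]].
Definition Apat (p : {ffun 'I_kk -> bool}) : set CN := [set S | Root S /\ pat S = p].
Definition tb : {ffun 'I_kk -> bool} := [ffun i => `[< T (idx i) >]].
Definition good (p q : {ffun 'I_kk -> bool}) := [forall i, (p i && q i) == tb i].

Lemma RR_pat : finite_set T -> T (vone n) ->
  RR T = [set X | exists p q, [/\ good p q, Apat p X.1 & Apat q X.2]].
Proof.
move=> fT T1; apply/seteqP; split=> X.
  move=> /(RR_D T1) [r1 r2 h]; exists (pat X.1), (pat X.2); split=> //.
  apply/forallP => i; rewrite !ffunE -asbool_and; apply/eqP; congr asbool.
  by apply/propext; split => /h.
move=> [p [q [g [r1 e1] [r2 e2]]]]; apply/(RR_D T1); split => //.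
apply: D_eq => //.
  by move=> v [a b]; split; apply: E_take.
move=> v /(nthP (vone n)) [i ilt <-].
move/forallP: g => /(_ (Ordinal ilt)); rewrite -e1 -e2 !ffunE /idx /=.
rewrite -asbool_and => /eqP e; split.
  by move=> Tv; apply/asboolP; rewrite e; apply/asboolP.
by move=> h; apply/asboolP; rewrite -e; apply/asboolP.
Qed.

End Patterns.
End Pat.

End MLib2.
Import MLib2.

Module MLib3.
Import Order.TTheory GRing.Theory Num.Theory.
Import numFieldNormedType.Exports.
Set Implicit Arguments. Unset Strict Implicit. Unset Printing Implicit Defensive.
Local Open Scope classical_set_scope.

Lemma open_seqI (X : topologicalType) (I : eqType) (B : I -> set X) (s : seq I) :
  (forall i, open (B i)) -> open [set x | forall i, i \in s -> B i x].
Proof.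
move=> oB; elim: s => [|h t IH].
  have -> : [set x | forall i, i \in ([::] : seq I) -> B i x] = setT.
    by apply/seteqP; split=> x.
  exact: openT.
have -> : [set x | forall i, i \in h :: t -> B i x] = B h `&` [set x | forall i, i \in t -> B i x].
  apply/seteqP; split=> x.
    by move=> H; split=> [|i it]; apply: H; rewrite inE ?eqxx ?it ?orbT.
  by move=> [Bh H] i; rewrite inE => /orP [/eqP ->|/H].
exact: openI.
Qed.

Section Topo.
Variable n : nat.
Local Notation letter := (letter n).
Local Notation bdry := (bdry n).
Local Notation CN := (CN n).
Local Notation vertex := (vertex n).
Local Notation bopen := (@bopen n).
Local Notation Root := (@Root n).

Lemma mkseq_ext (f g : nat -> letter) m : (forall i, (i < m)%N -> f i = g i) ->
  mkseq f m = mkseq g m.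
Proof. by move=> h; apply/eq_in_map => i; rewrite mem_iota add0n => /andP[_ im]; exact: h. Qed.

Lemma bopen_Cyl w : bopen (Cyl w).
Proof.
move=> xi Cxi; exists (size w) => eta h; rewrite /Cyl /= -[RHS]Cxi.
by apply: mkseq_ext.
Qed.

Lemma bopen_CylC w : bopen (~` Cyl w).
Proof.
move=> xi nC; exists (size w) => eta h Ce; apply: nC.
by rewrite /Cyl /= -[RHS]Ce; apply: mkseq_ext => i /h ->.
Qed.

Lemma sub_open (p : set bdry * bool) : bopen p.1 -> @open CN (vietoris_sub p).
Proof.
move=> hp; exists [set vietoris_sub p]; last by rewrite bigcup_set1.
by move=> _ ->; apply: finI_from1.
Qed.

Definition M (U : set bdry) : set CN := [set S | sval S `&` U !=set0].

Lemma M_open U : bopen U -> open (M U).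
Proof. by move=> hU; exact: (@sub_open (U, false)). Qed.

Lemma Sub_open U : bopen U -> open [set S : CN | sval S `<=` U].
Proof. by move=> hU; exact: (@sub_open (U, true)). Qed.

Lemma E_open (w : seq letter) : open (E w).
Proof. by have := M_open (bopen_Cyl (w:=w)). Qed.

Lemma EC_eq (w : seq letter) : ~` E w = [set S : CN | sval S `<=` ~` Cyl w].
Proof.
apply/seteqP; split=> S /=.
  by move=> nE xi Sxi Cxi; apply: nE; exists xi.
by move=> h [xi [Sxi Cxi]]; exact: h _ Sxi Cxi.
Qed.

Lemma EC_open (w : seq letter) : open (~` E w).
Proof. by rewrite EC_eq; apply: Sub_open; exact: bopen_CylC. Qed.

Definition Eb (b : bool) (w : seq letter) : set CN := if b then E w else ~` E w.

Lemma Eb_open b (w : seq letter) : open (Eb b w).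
Proof. by case: b; [exact: E_open|exact: EC_open]. Qed.

Lemma EbC b (w : seq letter) : ~` Eb b w = Eb (~~ b) w.
Proof. by case: b => //=; rewrite setCK. Qed.

Lemma E1 (a : letter) S : E [:: a] S <-> exists2 xi, sval S xi & sval xi 0%N = a.
Proof.
split.
  by move=> [xi [Sxi Cxi]]; exists xi => //; move: Cxi; rewrite /Cyl /= /mkseq /= => -[].
by move=> [xi Sxi h]; exists xi; split => //; rewrite /Cyl /= /mkseq /= h.
Qed.

Lemma RootE : Root = \bigcup_(ab in [set ab : letter * letter | ab.1 != ab.2])
                        (E [:: ab.1] `&` E [:: ab.2]).
Proof.
apply/seteqP; split=> S.
  move=> [xi [eta [Sxi Seta neq]]]; exists (sval xi 0%N, sval eta 0%N) => //.
  by split; apply/E1; [exists xi|exists eta].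
move=> [[a b] /= ab [/E1 [xi Sxi ea] /E1 [eta Seta eb]]].
by exists xi, eta; split=> //; rewrite ea eb.
Qed.

Lemma Root_open : open Root.
Proof.
rewrite RootE; apply: bigcup_open => ab _; apply: openI; exact: E_open.
Qed.

Lemma CN_pt (S : CN) : exists xi, sval S xi.
Proof. by case: (svalP S) => _ [xi [eta [? ? ?]]]; exists xi. Qed.

Lemma RootC : ~` Root = \bigcup_(a in [set: letter]) [set S : CN | sval S `<=` Cyl [:: a]].
Proof.
apply/seteqP; split=> S /=.
  move=> nR; have [xi Sxi] := CN_pt S; exists (sval xi 0%N) => // eta Seta.
  rewrite /Cyl /= /mkseq /=; congr (_ :: _).
  apply/eqP; apply/negPn/negP => ne; apply: nR; exists eta, xi; split => //.
move=> [a _ h] [xi [eta [Sxi Seta]]].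
have := h _ Sxi; have := h _ Seta; rewrite /Cyl /= /mkseq /= => -[->] [->].
by rewrite eqxx.
Qed.

Lemma RootC_open : open (~` Root).
Proof.
rewrite RootC; apply: bigcup_open => a _; apply: Sub_open; exact: bopen_Cyl.
Qed.

Section PatTopo.
Variable T : set vertex.

Lemma pat_eq (S : CN) p : pat T S = p <-> forall i, Eb (p i) (val (idx i)) S.
Proof.
split.
  move=> <- i; rewrite ffunE /Eb; case: asboolP => //.
move=> h; apply/ffunP => i; rewrite ffunE; have := h i; case: (p i) => /=.
  by move=> e; apply/asboolP.
by move=> ne; apply/asboolPn.
Qed.

Lemma Apat_eq p : @Apat n T p = Root `&` [set S | forall i, i \in enum 'I_(kk T) -> Eb (p i) (val (idx i)) S].
Proof.
apply/seteqP; split=> S.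
  by move=> [r /pat_eq h]; split=> // i _; exact: h.
by move=> [r h]; split=> //; apply/pat_eq => i; apply: h; rewrite mem_enum.
Qed.

Lemma Apat_open p : open (@Apat n T p).
Proof.
rewrite Apat_eq; apply: openI; first exact: Root_open.
apply: open_seqI => i; exact: Eb_open.
Qed.

Lemma ApatC_open p : open (~` @Apat n T p).
Proof.
have -> : ~` @Apat n T p = ~` Root `|` \bigcup_(i in [set: 'I_(kk T)]) Eb (~~ p i) (val (idx i)).
  rewrite Apat_eq setCI; congr (_ `|` _); apply/seteqP; split=> S /=.
    move=> /existsNP [i] /not_implyP [_] h; exists i => //.
    by rewrite -EbC.
  move=> [i _ h] H; have : Eb (p i) (sval (idx i)) S by apply: H; rewrite mem_enum.
  by move: h; rewrite -EbC.
apply: openU; first exact: RootC_open.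
apply: bigcup_open => i _; exact: Eb_open.
Qed.

Lemma Apat_closed p : closed (@Apat n T p).
Proof. by rewrite -[@Apat n T p]setCK; apply: open_closedC; exact: ApatC_open. Qed.

Lemma open_meas (A : set (CNm n)) : @open CN A -> measurable A.
Proof. exact: sub_sigma_algebra. Qed.

Lemma Apat_meas p : measurable (@Apat n T p : set (CNm n)).
Proof. apply: open_meas; exact: Apat_open. Qed.

Lemma Apat_disj p q S : @Apat n T p S -> @Apat n T q S -> p = q.
Proof. by move=> [_ <-] [_ <-]. Qed.

End PatTopo.
End Topo.

End MLib3.
Import MLib3.

Module MLib4.
Import Order.TTheory GRing.Theory Num.Theory.
Import numFieldNormedType.Exports.
Set Implicit Arguments. Unset Strict Implicit. Unset Printing Implicit Defensive.
Local Open Scope classical_set_scope.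
Local Open Scope ring_scope.
Local Open Scope ereal_scope.

Section Rect.
Context d (T : measurableType d) (R : realType).
Variables (P : finType) (A B : P -> set T).
Hypothesis mA : forall p, measurable (A p).
Hypothesis mB : forall p, measurable (B p).
Hypothesis dA : forall p q x, A p x -> A q x -> p = q.
Hypothesis dB : forall p q x, B p x -> B q x -> p = q.

Lemma seqU_cons (h : P) t : [set y | exists2 q, q \in h :: t & B q y] =
          B h `|` [set y | exists2 q, q \in t & B q y].
Proof.
  apply/seteqP; split=> y.
    by move=> [q]; rewrite inE => /orP [/eqP ->|qt By]; [left|right; exists q].
  by move=> [Bh|[q qt Bq]]; [exists h; rewrite ?inE ?eqxx|exists q; rewrite // inE qt orbT].
Qed.

Lemma seqU_meas (s : seq P) : measurable [set y | exists2 q, q \in s & B q y].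
Proof.
elim: s => [|h t IH].
  have -> : [set y | exists2 q, q \in ([::] : seq P) & B q y] = set0.
    by apply/seteqP; split=> y // [].
  exact: measurable0.
by rewrite seqU_cons; apply: measurableU.
Qed.

Lemma measure_seqU (nu : {measure set T -> \bar R}) (s : seq P) : uniq s ->
  nu [set y | exists2 q, q \in s & B q y] = \sum_(q <- s) nu (B q).
Proof.
elim: s => [|h t IH] /=.
  move=> _; rewrite big_nil.
  have -> : [set y | exists2 q, q \in ([::] : seq P) & B q y] = set0.
    by apply/seteqP; split=> y // [].
  by rewrite measure0.
move=> /andP [ht ut]; rewrite big_cons -IH //.
rewrite seqU_cons measureU //.
- exact: seqU_meas.
- apply/seteqP; split=> y // [Bh [q qt Bq]].
  by move: ht; rewrite (dB Bh Bq) qt.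
Qed.

Variable good : P -> P -> bool.
Let Y := [set X : T * T | exists p q, [/\ good p q, A p X.1 & B q X.2]].

Lemma rect_formula (mu nu : {measure set T -> \bar R}) :
  (mu \x nu) Y = \sum_(p : P) (mu (A p) * \sum_(q | good p q) nu (B q)).
Proof.
have step : forall x, nu (xsection Y x) =
    \sum_(p : P) (\sum_(q | good p q) nu (B q)) * (\1_(A p) x)%:E.
  move=> x.
  case: (pselect (exists p, A p x)) => [[p0 Ap0]|nA].
    rewrite (bigD1 p0) //= /indic mem_set // mule1 [X in (_ + X)%E]big1 ?adde0; last first.
      move=> p pp0; rewrite memNset ?mule0 //.
      by move=> Ap; move: pp0; rewrite (dA Ap Ap0) eqxx.
    have -> : xsection Y x = [set y | exists2 q, q \in [seq q <- enum P | good p0 q] & B q y].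
      apply/seteqP; split=> y.
        rewrite /xsection /= inE => -[p [q [g Ap Bq]]]; exists q => //.
        by rewrite mem_filter mem_enum andbT -(dA Ap Ap0).
      move=> [q]; rewrite mem_filter mem_enum andbT => g Bq.
      by rewrite /xsection /= inE; exists p0, q.
    rewrite measure_seqU ?filter_uniq ?enum_uniq //.
    by rewrite (big_filter (enum P) (good p0)) big_enum_cond.
    by rewrite -enumT enum_uniq.
  rewrite big1; last by move=> p _; rewrite /indic memNset ?mule0 // => Ap; apply: nA; exists p.
  rewrite (_ : xsection Y x = set0) ?measure0 //.
  apply/seteqP; split=> y //; rewrite /xsection /= inE => -[p [q [_ Ap _]]].
  by apply: nA; exists p.
rewrite /product_measure1 /=.
rewrite (eq_integral (fun x => \sum_(p : P) (\sum_(q | good p q) nu (B q)) * (\1_(A p) x)%:E)); last first.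
  by move=> x _; rewrite /= step.
rewrite ge0_integral_sum //; last first.
- move=> p x _; apply: mule_ge0; first by apply: sume_ge0 => q _; exact: measure_ge0.
  by rewrite lee_fin /indic; case: (_ \in _).
- move=> p; apply: measurable_funeM; apply/measurable_realfun.measurable_EFinP.
  exact: measurable_realfun.measurable_indic.
apply: eq_bigr => p _.
rewrite ge0_integralZl //.
- by rewrite integral_indic // setIT muleC.
all: first [ by apply/measurable_realfun.measurable_EFinP; exact: measurable_realfun.measurable_indic
           | by move=> x _; rewrite lee_fin /indic; case: (_ \in _)
           | by apply: sume_ge0 => q _; exact: measure_ge0 ].
Qed.

End Rect.

End MLib4.
Import MLib4.

Module MLib5.
Import Order.TTheory GRing.Theory Num.Theory.
Import numFieldNormedType.Exports.
Set Implicit Arguments. Unset Strict Implicit. Unset Printing Implicit Defensive.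
Local Open Scope classical_set_scope.

Lemma ultra_seqU (X : Type) (F : set_system X) (I : eqType) (A : I -> set X) (s : seq I) :
  UltraFilter F -> F [set x | exists2 i, i \in s & A i x] -> exists2 i, i \in s & F (A i).
Proof.
move=> UF; elim: s => [|h t IH].
  move=> F0; exfalso; have : F set0 by apply: filterS F0 => x [].
  exact: filter_not_empty.
move=> Fh; case: (in_ultra_setVsetC (A h) UF) => [Ah|nAh].
  by exists h; rewrite ?inE ?eqxx.
have : F [set x | exists2 i, i \in t & A i x].
  apply: filterS (filterI Fh nAh) => x [[i]]; rewrite inE => /orP [/eqP ->|it Ai] //.
  by exists i.
by move=> /IH [i it Fi]; exists i; rewrite // inE it orbT.
Qed.

Section Compact.
Variable n : nat.
Local Notation letter := (letter n).
Local Notation bdry := (bdry n).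
Local Notation CN := (CN n).
Local Notation vertex := (vertex n).
Local Notation bopen := (@bopen n).
Local Notation Root := (@Root n).
Local Notation M := (@M n).

Variable F : set_system CN.
Hypothesis UF : UltraFilter F.
Variable C : set bdry.

Lemma split_step (w : seq letter) : F (M (Cyl w `&` C)) ->
  exists x : letter, F (M (Cyl (rcons w x) `&` C)).
Proof.
move=> Fw.
have : F [set S | exists2 x, x \in enum [set: ('I_n.+2 * bool)%type] & M (Cyl (rcons w x) `&` C) S].
  apply: filterS Fw => S [xi [Sxi [Cxi Cx]]].
  exists (sval xi (size w)); first by rewrite mem_enum in_setT.
  exists xi; split=> //; split=> //.
  by rewrite /Cyl /= size_rcons mkseqS Cxi.
by move=> /(ultra_seqU UF) [x _ Fx]; exists x.
Qed.

Variable w0 : seq letter.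
Hypothesis H0 : F (M (Cyl w0 `&` C)).

Let def : letter := (ord0, true).
Let nxt (w : seq letter) : letter :=
  odflt def [pick x : ('I_n.+2 * bool)%type | `[< F (M (Cyl (rcons w x) `&` C)) >]].
Fixpoint W k := if k is k'.+1 then rcons (W k') (nxt (W k')) else w0.

Lemma W_F k : F (M (Cyl (W k) `&` C)).
Proof.
elim: k => [|k IH] //=; rewrite /nxt.
case: pickP => [x /asboolP //|none].
have [x Fx] := split_step IH.
by have := none x; rewrite (asboolT Fx).
Qed.

Lemma W_size k : size (W k) = (size w0 + k)%N.
Proof. by elim: k => [|k IH] /=; rewrite ?addn0 // size_rcons IH addnS. Qed.

Lemma W_prefix k k' : (k <= k')%N -> take (size (W k)) (W k') = W k.
Proof.
move=> /subnK <-; elim: (k' - k)%N => [|j IH]; first by rewrite add0n take_size.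
rewrite addSn /= -cats1 takel_cat ?IH //.
by rewrite !W_size leq_add2l leq_addl.
Qed.

Let xi0 (i : nat) : letter := nth def (W i.+1) i.

Lemma xi0_nth k i : (i < size (W k))%N -> xi0 i = nth def (W k) i.
Proof.
move=> ik; rewrite /xi0.
have [le|le] := leqP k i.+1.
  rewrite -(W_prefix le) nth_take //.
rewrite -(W_prefix (ltnW le)) nth_take //.
by rewrite W_size addnS ltnS leq_addl.
Qed.

Lemma xi0_mkseq k : mkseq xi0 (size (W k)) = W k.
Proof.
rewrite -[RHS](mkseq_nth def); apply: mkseq_ext => i ik.
exact: xi0_nth.
Qed.

Lemma xi0_red k : xi0 k.+1 != linv (xi0 k).
Proof.
have := W_F k.+2; move=> /filter_ex [S [eta [_ [Ceta _]]]].
have sz : (k.+1 < size (W k.+2))%N by rewrite W_size !addnS ltnS ltnS leq_addl.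
rewrite (xi0_nth sz) (xi0_nth (ltnW sz)) -Ceta !nth_mkseq //; last exact: ltnW.
exact: (svalP eta).
Qed.

Definition branch : bdry := exist _ xi0 xi0_red.

Lemma branch_F k : F (M (Cyl (mkseq (sval branch) k) `&` C)).
Proof.
apply: filterS (W_F k) => S [eta [Seta [Ceta Cc]]]; exists eta; split=> //; split=> //.
have kk : (k <= size (W k))%N by rewrite W_size leq_addl.
rewrite /Cyl /= size_mkseq -(take_mkseq _ kk) /=.
by rewrite Ceta -{1}(xi0_mkseq k) take_mkseq.
Qed.

Lemma branch_w0 : mkseq (sval branch) (size w0) = w0.
Proof. by have := xi0_mkseq 0. Qed.

End Compact.

Section Compact2.
Variable n : nat.
Local Notation letter := (letter n).
Local Notation bdry := (bdry n).
Local Notation CN := (CN n).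
Local Notation vertex := (vertex n).
Local Notation bopen := (@bopen n).
Local Notation Root := (@Root n).
Local Notation M := (@M n).

Lemma nbhsCN (S : CN) A : nbhs S A ->
  exists2 B, finI_from [set p | bopen p.1] (@vietoris_sub n) B & B S /\ B `<=` A.
Proof.
move=> [B [[D' sD <-] [i Di iS] BA]].
exists i; first exact: sD.
by split=> // x ix; apply: BA; exists i.
Qed.

Lemma Root_compact : compact Root.
Proof.
rewrite compact_ultra => F UF FR.
pose Sstar := [set xi : bdry | forall k, F (E (mkseq (sval xi) k))].
have ME : forall w, E w = M (Cyl w `&` setT) by move=> w; rewrite setIT.
have branchS : forall w, F (E w) -> exists2 xi, Sstar xi & mkseq (sval xi) (size w) = w.
  move=> w Fw; rewrite ME in Fw.
  exists (branch UF Fw); last exact: branch_w0.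
  by move=> k; rewrite ME; apply: branch_F.
have [[a b] ab [Fa Fb]] : exists2 ab : letter * letter, ab.1 != ab.2 & F (E [:: ab.1]) /\ F (E [:: ab.2]).
  have : F [set S | exists2 ab, ab \in enum [set: (('I_n.+2 * bool) * ('I_n.+2 * bool))%type] &
       (if ab.1 != ab.2 then E [:: ab.1] `&` E [:: ab.2] else set0) S].
    rewrite RootE in FR; apply: filterS FR => S [ab /= abn EE].
    by exists ab; rewrite ?mem_enum ?in_setT // abn.
  move=> /(ultra_seqU UF) [ab _]; case: ifP => [abn FE|_ F0].
    by exists ab; rewrite ?abn //; split; apply: filterS FE => S [].
  by exfalso; exact: filter_not_empty F0.
have [xa Sa ea] := branchS _ Fa.
have [xb Sb eb] := branchS _ Fb.
have {}ea : sval xa 0%N = a by move: ea; rewrite /mkseq /= => -[].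
have {}eb : sval xb 0%N = b by move: eb; rewrite /mkseq /= => -[].
have neq : xa <> xb.
  by move=> e; move: ab; rewrite /= -ea -eb e eqxx.
have Scl : bclosed Sstar.
  move=> xi nS; have [k nk] : exists k, ~ F (E (mkseq (sval xi) k)).
    by apply/existsNP => h; apply: nS => k; apply: h.
  exists k => eta h Se; apply: nk; rewrite (_ : mkseq (sval xi) k = mkseq (sval eta) k) //.
  by apply: mkseq_ext => i /h ->.
pose Sst : CN := exist _ Sstar (conj Scl (ex_intro _ xa (ex_intro _ xb (And3 Sa Sb neq)))).
exists Sst; split.
  exists xa, xb; split => //.
  by rewrite ea eb.
have subF : forall p : set bdry * bool, bopen p.1 -> vietoris_sub p Sst -> F (vietoris_sub p).
  move=> [U [|]] /= oU /=.
    move=> SU; case: (in_ultra_setVsetC [set S : CN | sval S `<=` U] UF) => // nF.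
    exfalso.
    have FM : F (M (Cyl [::] `&` ~` U)).
      apply: filterS nF => S /= nSU.
      have [xi [Sxi nU]] : exists xi, sval S xi /\ ~ U xi.
        apply: contrapT => h; apply: nSU => xi Sxi.
        by case: (pselect (U xi)) => // nU; exfalso; apply: h; exists xi.
      by exists xi; split=> //; split.
    set xi := branch UF FM.
    have Sxi : Sstar xi.
      move=> k; have := branch_F UF FM k; apply: filterS => S [eta [Seta [Ce _]]].
      by exists eta.
    have [m hm] := oU _ (SU _ Sxi).
    have := branch_F UF FM m; move=> /filter_ex [S [eta [_ [Ce nUe]]]].
    apply: nUe; apply: hm => i im.
    by move: Ce; rewrite /Cyl /= size_mkseq => /(congr1 (fun s => nth (ord0, true) s i));
       rewrite !nth_mkseq.
  move=> [xi [Sxi Uxi]].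
  have [m hm] := oU _ Uxi.
  apply: filterS (Sxi m) => S [eta [Seta Ce]]; exists eta; split=> //.
  apply: hm => i im.
  by move: Ce; rewrite /Cyl /= size_mkseq => /(congr1 (fun s => nth (ord0, true) s i));
     rewrite !nth_mkseq.
move=> A /nbhsCN [B [D' sD <-] [BS BA]].
apply: filterS BA _; apply: filter_bigI => j jD.
apply: subF; first by have := sD _ jD; rewrite inE.
by apply: BS.
Qed.

Lemma Apat_compact (T : set vertex) p : compact (@Apat n T p).
Proof.
have h1 := @Apat_closed n T p.
have h2 := @Root_compact.
apply: (subclosed_compact h1 h2).
by move=> S [].
Qed.

End Compact2.

End MLib5.
Import MLib5.

Module MLib6.
Import Order.TTheory GRing.Theory Num.Theory.
Import numFieldNormedType.Exports.
Set Implicit Arguments. Unset Strict Implicit. Unset Printing Implicit Defensive.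
Local Open Scope classical_set_scope.
Local Open Scope ring_scope.

Section Formula.
Variable n : nat.
Variable R : realType.
Local Notation CN := (CN n).
Local Notation vertex := (vertex n).
Variable T : set vertex.
Hypothesis fT : finite_set T.
Hypothesis T1 : T (vone n).
Local Notation P := {ffun 'I_(kk T) -> bool}.

Definition phi (x y : P -> R) : R := \sum_(p : P) x p * \sum_(q | good p q) y q.
Definition xm (mu : {measure set CNm n -> \bar R}) (p : P) : R := fine (mu (@Apat n T p)).

Lemma SCurr_fin (mu : {measure set CNm n -> \bar R}) p : SCurr mu -> mu (@Apat n T p) \is a fin_num.
Proof.
move=> [_ hK]; rewrite ge0_fin_numE ?measure_ge0 //.
apply: hK; exact: Apat_compact.
Qed.

Lemma RR_formula (mu nu : {measure set CNm n -> \bar R}) :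
  (mu \x nu)%E (RR T) = (\sum_(p : P) (mu (@Apat n T p) * \sum_(q | good p q) nu (@Apat n T q)))%E.
Proof.
rewrite (RR_pat fT T1).
apply: (@rect_formula _ (CNm n) R P (@Apat n T) (@Apat n T)).
- by move=> p; exact: Apat_meas.
- by move=> p; exact: Apat_meas.
- exact: Apat_disj.
- exact: Apat_disj.
Qed.

Lemma Phi_eq (mu nu : {measure set CNm n -> \bar R}) : SCurr mu -> SCurr nu ->
  (mu \x nu)%E (RR T) = (phi (xm mu) (xm nu))%:E.
Proof.
move=> smu snu; rewrite RR_formula /phi -sumEFin; apply: eq_bigr => p _.
rewrite EFinM -sumEFin; congr (_ * _)%E.
  by rewrite /xm fineK //; exact: SCurr_fin.
by apply: eq_bigr => q _; rewrite /xm fineK //; exact: SCurr_fin.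
Qed.

End Formula.

End MLib6.
Import MLib6.

Module MLib7.
Import Order.TTheory GRing.Theory Num.Theory.
Import numFieldNormedType.Exports.
Set Implicit Arguments. Unset Strict Implicit. Unset Printing Implicit Defensive.
Local Open Scope classical_set_scope.
Local Open Scope ring_scope.

Section Real.
Variable R : realType.
Variable P : finType.
Variable g : P -> P -> bool.

Definition phig (x y : P -> R) : R := \sum_(p : P) x p * \sum_(q | g p q) y q.

Lemma phig_lin1 x1 x2 y a b :
  phig (fun p => a * x1 p + b * x2 p) y = a * phig x1 y + b * phig x2 y.
Proof.
rewrite /phig !mulr_sumr -big_split; apply: eq_bigr => p _.
by rewrite mulrDl !mulrA.
Qed.

Lemma phig_lin2 x y1 y2 a b :
  phig x (fun q => a * y1 q + b * y2 q) = a * phig x y1 + b * phig x y2.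
Proof.
rewrite /phig !mulr_sumr -big_split; apply: eq_bigr => p _.
rewrite big_split /= -!mulr_sumr mulrDr.
by rewrite !mulrA (mulrC (x p) a) (mulrC (x p) b).
Qed.

Lemma phig_cont x y (e : R) : 0 < e -> exists2 d : R, 0 < d &
  forall x' y', (forall p, `|x' p - x p| < d /\ `|y' p - y p| < d) ->
  `|phig x' y' - phig x y| < e.
Proof.
move=> e0.
pose K := \sum_(p : P) \sum_(q | g p q) (`|y q| + 1 + `|x p|).
have K0 : 0 <= K by apply: sumr_ge0 => p _; apply: sumr_ge0 => q _; rewrite addr_ge0.
pose d := Num.min 1 (e / (K + 1)).
have K1 : 0 < K + 1 by rewrite ltr_wpDl.
have d0 : 0 < d by rewrite lt_min ltr01 divr_gt0.
exists d => // x' y' h.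
have d1 : d <= 1 by rewrite ge_min lexx.
have de : d <= e / (K + 1) by rewrite ge_min lexx orbT.
have diff : phig x' y' - phig x y =
   \sum_(p : P) \sum_(q | g p q) (x' p * y' q - x p * y q).
  rewrite /phig -sumrB; apply: eq_bigr => p _.
  by rewrite !mulr_sumr -sumrB.
rewrite diff.
apply: (le_lt_trans (ler_norm_sum _ _ _)).
apply: (@le_lt_trans _ _ (d * K)).
  rewrite /K mulr_sumr; apply: ler_sum => p _.
  apply: (le_trans (ler_norm_sum _ _ _)).
  rewrite mulr_sumr; apply: ler_sum => q _.
  have [hx hy] := h p; have [_ hy'] := h q.
  have -> : x' p * y' q - x p * y q = (x' p - x p) * y' q + x p * (y' q - y q) by ring.
  apply: (le_trans (ler_normD _ _)); rewrite !normrM.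
  have yb : `|y' q| <= `|y q| + 1.
    have -> : y' q = y q + (y' q - y q) by ring.
    apply: (le_trans (ler_normD _ _)); rewrite lerD2l.
    exact: (le_trans (ltW hy') d1).
  rewrite mulrDr [d * `|x p|]mulrC.
  apply: lerD.
    apply: (le_trans (ler_wpM2r (normr_ge0 _) (ltW hx))).
    by apply: ler_wpM2l => //; exact: ltW.
  by apply: ler_wpM2l => //; exact: ltW.
apply: (@le_lt_trans _ _ (e / (K + 1) * K)).
  by apply: ler_wpM2r.
rewrite mulrAC ltr_pdivrMr // ltr_pM2l //.
by rewrite ltrDl ltr01.
Qed.

End Real.

End MLib7.
Import MLib7.

Module MLib8.
Import Order.TTheory GRing.Theory Num.Theory.
Set Implicit Arguments. Unset Strict Implicit. Unset Printing Implicit Defensive.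
Local Open Scope classical_set_scope.

Section Trans.
Variable n : nat.
Local Notation letter := (letter n).
Local Notation bdry := (bdry n).
Local Notation CN := (CN n).
Local Notation vertex := (vertex n).
Local Notation linv := (@linv n).

Definition redf (f : nat -> letter) := forall k, f k.+1 != linv (f k).

Lemma linvK : involutive linv.
Proof. by case=> a b; rewrite /linv /= negbK. Qed.

Lemma pushb_red x f : redf f -> redf (pushb x f).
Proof.
move=> rf k; rewrite /pushb; case: ifP => h //.
case: k => [|k] //=.
by rewrite h.
Qed.

Lemma pushb_shift x f : f 0%N == linv x -> pushb x f = (fun k => f k.+1).
Proof. by rewrite /pushb => ->. Qed.

Lemma pushb_cons x f : f 0%N != linv x ->
  pushb x f = (fun k => if k is k'.+1 then f k' else x).
Proof. by rewrite /pushb => /negbTE ->. Qed.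

Lemma pushbK x f : redf f -> pushb (linv x) (pushb x f) = f.
Proof.
move=> rf; case h: (f 0%N == linv x).
  rewrite (pushb_shift h) pushb_cons; last first.
    by have := rf 0%N; rewrite (eqP h) !linvK.
  by apply: funext => -[|k] //=; rewrite (eqP h).
rewrite (pushb_cons (negbT h)) pushb_shift //=.
by rewrite linvK.
Qed.

Lemma pushbKV x f : redf f -> pushb x (pushb (linv x) f) = f.
Proof. by move=> rf; rewrite -{1}(linvK x) pushbK. Qed.

Definition winv (g : seq letter) := rev (map linv g).

Lemma winvK : involutive winv.
Proof. by move=> g; rewrite /winv map_rev revK -map_comp map_id_in // => x _ /=; rewrite linvK. Qed.

Lemma winv_cons x g : winv (x :: g) = winv g ++ [:: linv x].
Proof. by rewrite /winv /= rev_cons cats1. Qed.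

Lemma actb_cat (a b : seq letter) f : actb (a ++ b) f = actb a (actb b f).
Proof. by rewrite /actb foldr_cat. Qed.

Lemma actb_red g f : redf f -> redf (actb g f).
Proof. by elim: g => [|x g IH] //= rf; apply: pushb_red; apply: IH. Qed.

Lemma actbK g f : redf f -> actb (winv g) (actb g f) = f.
Proof.
elim: g f => [|x g IH] f rf //=.
rewrite winv_cons actb_cat /=.
rewrite pushbK; first exact: IH.
exact: actb_red.
Qed.

Lemma actbKV g f : redf f -> actb g (actb (winv g) f) = f.
Proof. by move=> rf; rewrite -{1}(winvK g) actbK. Qed.

Lemma actb_local (g : seq letter) f1 f2 m : (forall i, (i < m + size g)%N -> f1 i = f2 i) ->
  forall i, (i < m)%N -> actb g f1 i = actb g f2 i.
Proof.
elim: g m => [|x g IH] m h /=; first by move=> i im; apply: h; rewrite addn0.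
have h' : forall i, (i < m.+1)%N -> actb g f1 i = actb g f2 i.
  by apply: IH => i; rewrite addSn -addnS; apply: h.
move=> i im; rewrite /pushb (h' 0%N) //.
case: ifP => _; first by apply: h'; rewrite ltnS.
case: i im => [|i] im //=; apply: h'.
by apply: ltnW; apply: ltnW.
Qed.

Definition bact (g : seq letter) (xi : bdry) : bdry :=
  exist _ (actb g (sval xi)) (actb_red g (svalP xi)).

Lemma bdry_eq (a b : bdry) : sval a = sval b -> a = b.
Proof.
case: a b => [fa ha] [fb hb] /= e; subst fb.
by congr exist; apply: Prop_irrelevance.
Qed.

Lemma bactK g : cancel (bact g) (bact (winv g)).
Proof. by move=> xi; apply: bdry_eq; rewrite /= actbK //; exact: (svalP xi). Qed.

Lemma bactKV g : cancel (bact (winv g)) (bact g).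
Proof. by move=> xi; apply: bdry_eq; rewrite /= actbKV //; exact: (svalP xi). Qed.

Lemma bact_bopen g U : bopen U -> bopen (bact g @^-1` U).
Proof.
move=> oU xi Uxi; have [m hm] := oU _ Uxi.
exists (m + size g)%N => eta h; apply: hm => i im /=.
by apply: actb_local im => j /h.
Qed.

Lemma bact_img g A : bact g @` A = bact (winv g) @^-1` A.
Proof.
apply/seteqP; split=> xi.
  by move=> [eta Aeta <-]; rewrite /= bactK.
by move=> /= h; exists (bact (winv g) xi) => //; rewrite bactKV.
Qed.

Lemma bact_closed g A : bclosed A -> bclosed (bact g @` A).
Proof.
move=> cA; rewrite /bclosed bact_img (_ : ~` (bact (winv g) @^-1` A) = bact (winv g) @^-1` (~` A)) //.
exact: bact_bopen.
Qed.

Lemma cact_prop g (S : CN) : CNprop (bact g @` sval S).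
Proof.
case: (svalP S) => cS [xi [eta [Sxi Seta ne]]]; split.
  exact: bact_closed.
exists (bact g xi), (bact g eta); split; [by exists xi|by exists eta|].
by move=> /(congr1 (bact (winv g))); rewrite !bactK.
Qed.

Definition cact g (S : CN) : CN := exist _ _ (cact_prop g S).

Lemma CN_eq (a b : CN) : sval a = sval b -> a = b.
Proof.
case: a b => [fa ha] [fb hb] /= e; subst fb.
by congr exist; apply: Prop_irrelevance.
Qed.

Lemma cactK g : cancel (cact g) (cact (winv g)).
Proof.
move=> S; apply: CN_eq => /=.
apply/seteqP; split=> xi /=.
  by move=> [eta [zeta Sz <-] <-]; rewrite bactK.
by move=> Sxi; exists (bact g xi); [exists xi|rewrite bactK].
Qed.

Lemma cactKV g : cancel (cact (winv g)) (cact g).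
Proof. by move=> S; have := cactK (winv g) S; rewrite winvK. Qed.

Lemma ctranslateE (g : vertex) A S :
  ctranslate g A S <-> exists2 S', A S' & S = cact (val g) S'.
Proof.
split.
  move=> [S' [AS' e]]; exists S' => //; apply: CN_eq; rewrite e /=.
  apply/seteqP; split=> xi /=.
    by move=> [eta [Seta exi]]; exists eta => //; apply: bdry_eq.
  by move=> [eta Seta <-]; exists eta.
move=> [S' AS' ->]; exists S'; split=> //=.
apply/seteqP; split=> xi /=.
  by move=> [eta Seta <-]; exists eta.
by move=> [eta [Seta exi]]; exists eta => //; apply: bdry_eq.
Qed.

Lemma cact_vsub h (p : set bdry * bool) :
  cact h @^-1` vietoris_sub p = vietoris_sub (bact h @^-1` p.1, p.2).
Proof.
case: p => U [|]; apply/seteqP; split=> S /=.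
- by move=> hs xi Sxi; apply: hs; exists xi.
- by move=> hs _ [xi Sxi <-]; apply: hs.
- by move=> [_ [[xi Sxi <-] Uxi]]; exists xi.
- by move=> [xi [Sxi Uxi]]; exists (bact h xi); split => //; exists xi.
Qed.

End Trans.

End MLib8.
Import MLib8.

Module MLib9.
Import Order.TTheory GRing.Theory Num.Theory.
Set Implicit Arguments. Unset Strict Implicit. Unset Printing Implicit Defensive.
Local Open Scope classical_set_scope.

Section ConvTrans.
Variable n : nat.
Local Notation letter := (letter n).
Local Notation bdry := (bdry n).
Local Notation CN := (CN n).
Local Notation vertex := (vertex n).
Local Notation linv := (@linv n).

Definition Dv (v : seq letter) (f : nat -> letter) : option letter :=
  if mkseq f (size v) == v then Some (f (size v)) else None.

Lemma mkseq_cons (f : nat -> letter) m : mkseq f m.+1 = f 0%N :: mkseq (fun k => f k.+1) m.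
Proof.
rewrite /mkseq /=; congr cons; rewrite -[1%N]/(1 + 0)%N iotaDl -map_comp.
by apply: eq_map => k /=; rewrite add1n.
Qed.

Lemma mkseq_neq (f g : nat -> letter) m : mkseq f m != mkseq g m ->
  exists i, (i < m)%N /\ f i != g i.
Proof.
move=> H; apply: contrapT => h; apply: (negP H); apply/eqP; apply: mkseq_ext => i im.
by apply/eqP; apply/negPn/negP => ne; apply: h; exists i.
Qed.

Lemma on_geodE (xi eta : nat -> letter) v : on_geod xi eta v <-> Dv v xi != Dv v eta.
Proof.
split.
  move=> [m [e [i [im ne]]]].
  have key : forall (a b : nat -> letter), v = mkseq a m -> a i != b i -> Dv v a != Dv v b.
    move=> a b -> nab; rewrite /Dv size_mkseq eqxx.
    case: (eqVneq (mkseq b m) (mkseq a m)) => [eb|//].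
    apply/negP => /eqP [abm]; move: nab.
    case: (ltngtP i m) im => // [lt _|-> _]; last by rewrite abm eqxx.
    have := congr1 (fun s => nth (ord0, true) s i) eb; rewrite !nth_mkseq // => ->.
    by rewrite eqxx.
  case: e => e; first exact: key.
  by rewrite eq_sym; apply: key => //; rewrite eq_sym.
rewrite /Dv; case hx: (mkseq xi (size v) == v); case hy: (mkseq eta (size v) == v) => //.
- move=> ne; exists (size v); split; first by left; rewrite (eqP hx).
  by exists (size v); split => //; apply: contra ne => /eqP ->.
- move=> _; exists (size v); split; first by left; rewrite (eqP hx).
  have : mkseq xi (size v) != mkseq eta (size v) by rewrite (eqP hx) eq_sym hy.
  by move=> /mkseq_neq [i [im ne]]; exists i; split => //; exact: ltnW.
- move=> _; exists (size v); split; first by right; rewrite (eqP hy).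
  have : mkseq xi (size v) != mkseq eta (size v) by rewrite (eqP hy) hx.
  by move=> /mkseq_neq [i [im ne]]; exists i; split => //; exact: ltnW.
Qed.


Definition tau (x : letter) (v : seq letter) (o : option letter) : option letter :=
  match v with
  | [::] => if o is Some a then (if a == linv x then None else Some a) else None
  | a :: v' => if a == linv x then
                 (if o is Some b then Some b else (if v' is [::] then Some x else None))
               else o
  end.

Lemma red_cons2 (a b : letter) v : reduced [:: a, b & v] -> b != linv a.
Proof. by rewrite /reduced /= => /andP []. Qed.

Lemma D_push x v f : reduced v -> redf f -> Dv (pushw x v) (pushb x f) = tau x v (Dv v f).
Proof.
move=> rv rf; case: v rv => [|a v'] rv.
  rewrite /Dv /=; case h: (f 0%N == linv x).
    rewrite (pushb_shift h) /mkseq /= eqseq_cons andbT.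
    have : f 1%N != x by have := rf 0%N; rewrite (eqP h) linvK.
    by move=> /negbTE ->.
  by rewrite (pushb_cons (negbT h)) /mkseq /= eqxx.
rewrite /=; case ha: (a == linv x).
  case h: (f 0%N == linv x).
    rewrite (pushb_shift h) /Dv /= mkseq_cons eqseq_cons (eqP h) -(eqP ha) eqxx /=.
    case: ifP => // hv; case: v' rv hv => //.
  rewrite (pushb_cons (negbT h)) /Dv /= mkseq_cons eqseq_cons.
  have fa : f 0%N != a by rewrite (eqP ha) h.
  rewrite (negbTE fa) /=.
  case: v' rv => [|b v''] rv //=.
  rewrite mkseq_cons eqseq_cons.
  have : b != x by have := red_cons2 rv; rewrite (eqP ha) linvK.
  by rewrite eq_sym => /negbTE ->.
case h: (f 0%N == linv x).
  rewrite (pushb_shift h) /Dv /= mkseq_cons eqseq_cons.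
  have -> : (f 1%N == x) = false.
    by apply/negbTE; have := rf 0%N; rewrite (eqP h) linvK.
  rewrite /= [mkseq f _]mkseq_cons eqseq_cons.
  have fa : (f 0%N == a) = false by rewrite (eqP h) eq_sym ha.
  by rewrite fa.
rewrite (pushb_cons (negbT h)) /Dv /= mkseq_cons.
by rewrite eqseq_cons eqxx.
Qed.


Lemma Dv_some1 x f b : redf f -> Dv [:: linv x] f = Some b -> b != x.
Proof.
move=> rf; rewrite /Dv /mkseq /=; case: ifP => // /eqP [e] [<-].
by have := rf 0%N; rewrite e linvK.
Qed.

Lemma tau_inj x v f1 f2 : reduced v -> redf f1 -> redf f2 ->
  tau x v (Dv v f1) = tau x v (Dv v f2) -> Dv v f1 = Dv v f2.
Proof.
move=> rv r1 r2; case: v rv => [|a v'] rv.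
  rewrite /Dv /= /mkseq /=.
  case: ifP => h1; case: ifP => h2 //.
  by move=> _; rewrite (eqP h1) (eqP h2).
rewrite /=; case ha: (a == linv x) => //.
case e1: (Dv (a :: v') f1) => [b1|]; case e2: (Dv (a :: v') f2) => [b2|] //.
  case: v' rv e1 e2 => [|c v''] rv e1 e2 //= [eb].
  by move: e1; rewrite (eqP ha) => /Dv_some1 => /(_ r1); rewrite eb eqxx.
case: v' rv e1 e2 => [|c v''] rv e1 e2 //= [eb].
by move: e2; rewrite (eqP ha) => /Dv_some1 => /(_ r2); rewrite -eb eqxx.
Qed.

Lemma D_push_neq x v f1 f2 : reduced v -> redf f1 -> redf f2 ->
  (Dv (pushw x v) (pushb x f1) != Dv (pushw x v) (pushb x f2)) = (Dv v f1 != Dv v f2).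
Proof.
move=> rv r1 r2; rewrite !D_push //; congr negb.
apply/eqP/eqP => [|->//]; exact: tau_inj.
Qed.

End ConvTrans.

Section VertexAct.
Variable n : nat.
Local Notation letter := (letter n).
Local Notation bdry := (bdry n).
Local Notation CN := (CN n).
Local Notation vertex := (vertex n).
Local Notation linv := (@linv n).

Lemma pushw_red (x : letter) w : reduced w -> reduced (pushw x w).
Proof.
case: w => [|y w] //= rw; case: ifP => h.
  by move: rw; rewrite /reduced /= => /path_sorted.
by rewrite /reduced /= h.
Qed.

Lemma mulw_red (g : seq letter) w : reduced w -> reduced (mulw g w).
Proof. by elim: g => [|x g IH] //= rw; apply: pushw_red; apply: IH. Qed.

Lemma pushwK (x : letter) w : reduced w -> pushw (linv x) (pushw x w) = w.
Proof.
case: w => [|y w] rw /=; first by rewrite linvK eqxx.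
case: ifP => h /=; last by rewrite linvK eqxx.
case: w rw => [|z w] rw /=; first by rewrite (eqP h).
have : z != x by move: rw; rewrite /reduced /= (eqP h) linvK => /andP [].
by move=> /negbTE; rewrite linvK => ->; rewrite (eqP h).
Qed.

Lemma mulw_cat (a b : seq letter) w : mulw (a ++ b) w = mulw a (mulw b w).
Proof. by rewrite /mulw foldr_cat. Qed.

Lemma mulwK (g : seq letter) w : reduced w -> mulw (winv g) (mulw g w) = w.
Proof.
elim: g w => [|x g IH] w rw //=.
rewrite winv_cons mulw_cat /= pushwK; first exact: IH.
exact: mulw_red.
Qed.

Definition vmul (g : seq letter) (u : vertex) : vertex :=
  exist _ (mulw g (val u)) (mulw_red g (valP u)).

Definition vimg (g : seq letter) (A : set vertex) : set vertex :=
  [set v : vertex | exists u, A u /\ val v = mulw g (val u)].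

Lemma vmul_inj g : injective (vmul g).
Proof.
move=> u1 u2 /(congr1 val) /= e; apply/val_inj.
by rewrite -(mulwK g (valP u1)) e mulwK //; exact: (valP u2).
Qed.

Lemma vimgE g A v : vimg g A v <-> exists2 u, A u & v = vmul g u.
Proof.
split.
  by move=> [u [Au e]]; exists u => //; apply/val_inj.
by move=> [u Au ->]; exists u.
Qed.

Lemma vimg_inj g A B : vimg g A = vimg g B -> A = B.
Proof.
move=> e; apply/seteqP; split=> u Au.
  have : vimg g B (vmul g u) by rewrite -e; apply/vimgE; exists u.
  by move=> /vimgE [u' Bu' /vmul_inj ->].
have : vimg g A (vmul g u) by rewrite e; apply/vimgE; exists u.
by move=> /vimgE [u' Au' /vmul_inj ->].
Qed.

Lemma vimgI g A B : vimg g (A `&` B) = vimg g A `&` vimg g B.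
Proof.
apply/seteqP; split=> v.
  by move=> /vimgE [u [Au Bu] ->]; split; apply/vimgE; exists u.
move=> [/vimgE [u Au ->] /vimgE [u' Bu' /vmul_inj e]].
by apply/vimgE; exists u => //; split => //; rewrite e.
Qed.

Lemma Conv_push (x : letter) (S : set bdry) :
  Conv (bact [:: x] @` S) = vimg [:: x] (Conv S).
Proof.
apply/seteqP; split=> v.
  move=> [_ [_ [[xi Sxi <-] [eta Seta <-] ne og]]].
  pose u := vmul [:: linv x] v.
  have uv : mulw [:: x] (val u) = val v.
    by rewrite /= -{1}(linvK x) pushwK //; exact: (valP v).
  exists u; split => //.
  exists xi, eta; split => //; first by move=> e; apply: ne; rewrite e.
  apply/on_geodE; move: og => /on_geodE.
  rewrite -uv /= D_push_neq //; [exact: (valP u)|exact: (svalP xi)|exact: (svalP eta)].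
move=> [u [[xi [eta [Sxi Seta ne og]]] e]].
exists (bact [:: x] xi), (bact [:: x] eta); split; [by exists xi|by exists eta| |].
  by move=> /(congr1 (bact (winv [:: x]))); rewrite !bactK.
apply/on_geodE; move: og => /on_geodE.
rewrite e /= D_push_neq //; [exact: (valP u)|exact: (svalP xi)|exact: (svalP eta)].
Qed.

Lemma Conv_act (g : seq letter) (S : set bdry) : Conv (bact g @` S) = vimg g (Conv S).
Proof.
elim: g S => [|x g IH] S.
  have -> : bact [::] @` S = S.
    apply/seteqP; split=> xi; first by move=> [eta Seta <-]; rewrite (_ : bact [::] eta = eta) //; apply: bdry_eq.
    by move=> Sxi; exists xi => //; apply: bdry_eq.
  apply/seteqP; split=> v; first by move=> Cv; exists v.
  by move=> [u [Cu e]]; rewrite (_ : v = u) //; apply/val_inj.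
have -> : bact (x :: g) @` S = bact [:: x] @` (bact g @` S).
  apply/seteqP; split=> xi.
    by move=> [eta Seta <-]; exists (bact g eta); [exists eta|apply: bdry_eq].
  by move=> [_ [eta Seta <-] <-]; exists eta => //; apply: bdry_eq.
rewrite Conv_push IH.
apply/seteqP; split=> v.
  by move=> [w [[u [Cu ew]] ev]]; exists u; split => //; rewrite ev ew.
move=> [u [Cu ev]]; exists (vmul g u); split; first by exists u.
by rewrite ev.
Qed.

End VertexAct.

End MLib9.
Import MLib9.

Module MLib10.
Import Order.TTheory GRing.Theory Num.Theory.
Import numFieldNormedType.Exports.
Set Implicit Arguments. Unset Strict Implicit. Unset Printing Implicit Defensive.
Local Open Scope classical_set_scope.
Local Open Scope ring_scope.

Section Part2.
Variable n : nat.
Local Notation letter := (letter n).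
Local Notation bdry := (bdry n).
Local Notation CN := (CN n).
Local Notation vertex := (vertex n).
Local Notation bopen := (@bopen n).

Lemma preimage_open (f : CN -> CN) :
  (forall p : set bdry * bool, bopen p.1 -> open (f @^-1` vietoris_sub p)) ->
  forall A, open A -> open (f @^-1` A).
Proof.
move=> hf A oA; rewrite openE => S AfS.
have : nbhs (f S) A by apply: open_nbhs_nbhs; split.
move=> /nbhsCN [B [D' sD eB] [BS BA]].
rewrite /interior /=.
have H := @filter_bigI _ _ D' (fun j => f @^-1` vietoris_sub j) (nbhs S) (nbhs_filter S).
apply: (filterS _ (H _)).
  by move=> S' h; apply: BA; rewrite -eB => j jD; exact: h j jD.
move=> j jD; apply: open_nbhs_nbhs; split; last by move: BS; rewrite -eB; apply.
by apply: hf; have := sD _ jD; rewrite inE.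
Qed.

Lemma ctrans_pre (g : vertex) (A : set CN) : ctranslate g A = cact (winv (val g)) @^-1` A.
Proof.
apply/seteqP; split=> S.
  by move=> /ctranslateE [S' AS' ->]; rewrite /= cactK.
move=> h; apply/ctranslateE; exists (cact (winv (val g)) S) => //.
by rewrite cactKV.
Qed.

Lemma ctrans_open (g : vertex) (A : set CN) : open A -> open (ctranslate g A).
Proof.
move=> oA; rewrite ctrans_pre; apply: preimage_open => // p hp.
rewrite cact_vsub; apply: (@sub_open n (_, _)); exact: bact_bopen.
Qed.

Lemma bimgK (g : seq letter) (A : set bdry) : bact g @` (bact (winv g) @` A) = A.
Proof.
apply/seteqP; split=> xi.
  by move=> [_ [eta Aeta <-] <-]; rewrite bactKV.
by move=> Axi; exists (bact (winv g) xi); [exists xi|rewrite bactKV].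
Qed.

Variable T : set vertex.
Hypothesis fT : finite_set T.
Hypothesis T1 : T (vone n).
Local Notation P := {ffun 'I_(kk T) -> bool}.

Lemma RR_trans (g : vertex) : RR (vtranslate g T) =
  [set X | exists p q, [/\ good p q, ctranslate g (@Apat n T p) X.1 & ctranslate g (@Apat n T q) X.2]].
Proof.
apply/seteqP; split=> X.
  move=> h; pose S1 := cact (winv (val g)) X.1; pose S2 := cact (winv (val g)) X.2.
  have e1 : X.1 = cact (val g) S1 by rewrite cactKV.
  have e2 : X.2 = cact (val g) S2 by rewrite cactKV.
  have RS : RR T ((S1, S2) : CNm n * CNm n).
    rewrite /RR /=; apply: (@vimg_inj _ (val g)).
    rewrite vimgI -!Conv_act !bimgK.
    exact: h.
  move: RS; rewrite (RR_pat fT T1) => -[p [q [gpq A1 A2]]].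
  exists p, q; split => //; apply/ctranslateE.
    by exists S1.
  by exists S2.
move=> [p [q [gpq /ctranslateE [S1 A1 e1] /ctranslateE [S2 A2 e2]]]].
have RS : RR T ((S1, S2) : CNm n * CNm n).
  by rewrite (RR_pat fT T1); exists p, q.
rewrite /RR /= e1 e2 /= !Conv_act -vimgI.
by rewrite /RR /= in RS; rewrite RS.
Qed.

Variable R : realType.

Lemma part2 (g : vertex) (mu nu : {measure set CNm n -> \bar R}) :
  SCurr mu -> SCurr nu -> (mu \x nu)%E (RR T) = (mu \x nu)%E (RR (vtranslate g T)).
Proof.
move=> [imu _] [inu _].
rewrite RR_formula // RR_trans.
rewrite (@rect_formula _ (CNm n) R P (fun p => ctranslate g (@Apat n T p)) (fun p => ctranslate g (@Apat n T p))).
- apply: eq_bigr => p _; rewrite imu; last exact: Apat_meas.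
  congr (_ * _)%E; apply: eq_bigr => q _; rewrite inu //; exact: Apat_meas.
- by move=> p; apply: open_meas; apply: ctrans_open; exact: Apat_open.
- by move=> p; apply: open_meas; apply: ctrans_open; exact: Apat_open.
- by move=> p q S; rewrite !ctrans_pre; exact: Apat_disj.
- by move=> p q S; rewrite !ctrans_pre; exact: Apat_disj.
Qed.

End Part2.

End MLib10.
Import MLib10.

Module MLib11.
Import Order.TTheory GRing.Theory Num.Theory.
Import numFieldNormedType.Exports.
Set Implicit Arguments. Unset Strict Implicit. Unset Printing Implicit Defensive.
Local Open Scope classical_set_scope.
Local Open Scope ring_scope.

Section Part3.
Variable n : nat.
Variable R : realType.
Local Notation CN := (CN n).
Local Notation vertex := (vertex n).

Lemma indic_cont (A : set CN) : open A -> open (~` A) -> continuous (\1_A : CN -> R).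
Proof.
move=> oA oC S; case: (pselect (A S)) => AS.
  apply: (@near_cst_continuous _ _ (1:R)).
  apply: filterS (open_nbhs_nbhs (conj oA AS)) => S' AS'.
  by rewrite indicE mem_set.
apply: (@near_cst_continuous _ _ (0:R)).
apply: filterS (open_nbhs_nbhs (conj oC AS)) => S' AS'.
by rewrite indicE memNset.
Qed.

Variable T : set vertex.
Hypothesis fT : finite_set T.
Hypothesis T1 : T (vone n).
Local Notation P := {ffun 'I_(kk T) -> bool}.
Local Notation xm := (@xm n R T).

Lemma xm_fin (mu : {measure set CNm n -> \bar R}) p : SCurr mu ->
  mu (@Apat n T p) = (xm mu p)%:E.
Proof. by move=> smu; rewrite /xm fineK //; exact: SCurr_fin. Qed.

Lemma part3b (mu1 mu2 mu3 nu : {measure set CNm n -> \bar R}) (a b : R) :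
  SCurr mu1 -> SCurr mu2 -> SCurr mu3 -> SCurr nu -> 0 <= a -> 0 <= b ->
  (forall A, measurable A -> mu3 A = (a%:E * mu1 A + b%:E * mu2 A)%E) ->
  (mu3 \x nu)%E (RR T) = (a%:E * (mu1 \x nu) (RR T) + b%:E * (mu2 \x nu) (RR T))%E
  /\ (nu \x mu3)%E (RR T) = (a%:E * (nu \x mu1) (RR T) + b%:E * (nu \x mu2) (RR T))%E.
Proof.
move=> s1 s2 s3 sn a0 b0 h.
have e3 : xm mu3 = (fun p => a * xm mu1 p + b * xm mu2 p).
  apply: boolp.funext => p; rewrite /xm h; last exact: Apat_meas.
  by rewrite (xm_fin _ s1) (xm_fin _ s2) -!EFinM -EFinD.
have phiE : forall x y, @phi n R T x y = phig (@good n T) x y by [].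
rewrite !Phi_eq // e3; split.
  by rewrite !phiE phig_lin1 EFinD !EFinM.
by rewrite !phiE phig_lin2 EFinD !EFinM.
Qed.

Lemma part3c (mu nu : {measure set CNm n -> \bar R}) : SCurr mu -> SCurr nu ->
     forall e : R, 0 < e ->
     exists (k : nat) (F : nat -> CN -> R), (forall i, (i < k)%N -> Cc (F i)) /\
     exists2 d : R, 0 < d &
     forall mu' nu' : {measure set CNm n -> \bar R}, SCurr mu' -> SCurr nu' ->
       (forall i, (i < k)%N ->
          (`| \int[mu']_S (F i S)%:E - \int[mu]_S (F i S)%:E | < d%:E)%E /\
          (`| \int[nu']_S (F i S)%:E - \int[nu]_S (F i S)%:E | < d%:E)%E) ->
       (`| (mu' \x nu') (RR T) - (mu \x nu) (RR T) | < e%:E)%E.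
Proof.
move=> smu snu e e0.
have [d d0 hd] := phig_cont (@good n T) (xm mu) (xm nu) e0.
pose ps := enum P.
pose p0 : P := [ffun=> false].
pose F := fun i (S : CN) => (\1_(@Apat n T (nth p0 ps i)) : CN -> R) S.
exists (size ps), F; split.
  move=> i _; split.
    by apply: indic_cont; [exact: Apat_open|exact: ApatC_open].
  exists (@Apat n T (nth p0 ps i)); split; first exact: Apat_compact.
  by move=> S nA; rewrite /F indicE memNset.
exists d => // mu' nu' smu' snu' H.
have intF : forall (m : {measure set CNm n -> \bar R}) i,
    (\int[m]_S (F i S)%:E)%E = m (@Apat n T (nth p0 ps i)).
  move=> m i; rewrite /F integral_indic ?setIT //; exact: Apat_meas.
have hx : forall p, `|xm mu' p - xm mu p| < d /\ `|xm nu' p - xm nu p| < d.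
  move=> p; have pin : p \in ps by rewrite mem_enum.
  have ip : (index p ps < size ps)%N by rewrite index_mem.
  have [h1 h2] := H _ ip.
  move: h1 h2; rewrite !intF (nth_index p0 pin).
  rewrite (xm_fin _ smu') (xm_fin _ smu) (xm_fin _ snu') (xm_fin _ snu).
  by rewrite -!EFinB !abse_EFin !lte_fin.
have := hd _ _ hx.
by rewrite !Phi_eq // -EFinB abse_EFin lte_fin.
Qed.

End Part3.


End MLib11.
Import MLib11.


Local Open Scope classical_set_scope.
Local Open Scope ring_scope.

Theorem mainTheorem8 (n : nat) (R : realType) (T T' : set (vertex n)) :
  subtree1 T -> subtree1 T' ->
  (* (1) *)
  (T <> T' -> RR T `&` RR T' = set0) /\
  (* (2) *)
  ((exists g : vertex n, vtranslate g T = T') ->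
     forall mu nu : {measure set CNm n -> \bar R}, SCurr mu -> SCurr nu ->
       (mu \x nu)%E (RR T) = (mu \x nu)%E (RR T')) /\
  (* (3) finite values, bilinearity over R_{>=0}, continuity for weak-* topology *)
  ((forall mu nu : {measure set CNm n -> \bar R}, SCurr mu -> SCurr nu ->
       (mu \x nu)%E (RR T) \is a fin_num) /\
   (forall (mu1 mu2 mu3 nu : {measure set CNm n -> \bar R}) (a b : R),
       SCurr mu1 -> SCurr mu2 -> SCurr mu3 -> SCurr nu -> 0 <= a -> 0 <= b ->
       (forall A, measurable A -> mu3 A = (a%:E * mu1 A + b%:E * mu2 A)%E) ->
       (mu3 \x nu)%E (RR T) = (a%:E * (mu1 \x nu) (RR T) + b%:E * (mu2 \x nu) (RR T))%E
       /\ (nu \x mu3)%E (RR T) = (a%:E * (nu \x mu1) (RR T) + b%:E * (nu \x mu2) (RR T))%E) /\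
   (forall mu nu : {measure set CNm n -> \bar R}, SCurr mu -> SCurr nu ->
     forall e : R, 0 < e ->
     exists (k : nat) (F : nat -> CN n -> R), (forall i, (i < k)%N -> Cc (F i)) /\
     exists2 d : R, 0 < d &
     forall mu' nu' : {measure set CNm n -> \bar R}, SCurr mu' -> SCurr nu' ->
       (forall i, (i < k)%N ->
          (`| \int[mu']_S (F i S)%:E - \int[mu]_S (F i S)%:E | < d%:E)%E /\
          (`| \int[nu']_S (F i S)%:E - \int[nu]_S (F i S)%:E | < d%:E)%E) ->
       (`| (mu' \x nu') (RR T) - (mu \x nu) (RR T) | < e%:E)%E)).
Proof.
move=> [fT T1 _] _.
split.
  move=> neq; apply/seteqP; split=> X // [h1 h2]; apply: neq.
  by rewrite /RR /= in h1 h2; rewrite -h1 -h2.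
split.
  by move=> [g <-] mu nu smu snu; exact: part2.
split.
  by move=> mu nu smu snu; rewrite (Phi_eq fT T1 smu snu).
split.
  by move=> *; apply: part3b.
by move=> *; apply: part3c.
Qed.
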